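(* Let $A,B\in S(4,\mathbb{R})$, let $\{v_1,v_2,v_3,v_4\}$ be a symplectic basis for $A$ and $\{w_1,w_2,w_3,w_4\}$ a symplectic basis for $B$. If the basis-values of these two bases are equal, i.e. $(v_1^TJv_2, v_1^TJv_3, v_1^TJv_4, v_2^TJv_3, v_2^TJv_4, v_3^TJv_4) = (w_1^TJw_2, w_1^TJw_3, w_1^TJw_4, w_2^TJw_3, w_2^TJw_4, w_3^TJw_4)$, then there exists $P\in\operatorname{Sp}(4)$ with $A = P^T B P$.
   Context: $S(4,\mathbb{R})$ is the set of invertible skew-symmetric real $4\times4$ matrices; $J = \operatorname{diag}(J_0,J_0)$ with $J_0 = \begin{bmatrix} 0 & 1 \\ -1 & 0\end{bmatrix}$; $\operatorname{Sp}(4) = \{P : P^TJP = J\}$. A basis $\{v_1,v_2,v_3,v_4\}$ of $\mathbb{R}^4$ is a symplectic basis for $A$ if $v_1^TAv_2 = 1$, $v_1^TAv_3 = 0$, $v_1^TAv_4 = 0$, $v_2^TAv_3 = 0$, $v_2^TAv_4 = 0$, $v_3^TAv_4 = 1$. *)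

(* Defs.v *)
From HB Require Import structures.
From mathcomp Require Import all_boot all_order all_algebra.
From mathcomp Require Import Rstruct.
From Stdlib Require Import Reals.
Set Implicit Arguments. Unset Strict Implicit. Unset Printing Implicit Defensive.
Import GRing.Theory Num.Theory.
Local Open Scope ring_scope.

Definition mat4 := 'M[R]_4.
Definition vec4 := 'cV[R]_4.

Definition bform (A : mat4) (u v : vec4) : R := ((u^T *m A *m v) 0 0).

Definition is_S4 (A : mat4) : Prop := A^T = - A /\ A \in unitmx.

(* J = diag(J0, J0), J0 = [[0,1],[-1,0]] *)
Definition J0 : 'M[R]_2 := \matrix_(i < 2, j < 2)
  (if (i == 0 :> nat) && (j == 1 :> nat) then 1
   else if (i == 1 :> nat) && (j == 0 :> nat) then -1 else 0).
Definition Jmat : mat4 := block_mx J0 0 0 J0.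

Definition is_Sp4 (P : mat4) : Prop := P^T *m Jmat *m P = Jmat.

Definition colmat (v : 'I_4 -> vec4) : mat4 := \matrix_(i < 4, j < 4) v j i 0.

Definition is_basis4 (v : 'I_4 -> vec4) : Prop := colmat v \in unitmx.

Definition i0 : 'I_4 := @Ordinal 4 0 isT.
Definition i1 : 'I_4 := @Ordinal 4 1 isT.
Definition i2 : 'I_4 := @Ordinal 4 2 isT.
Definition i3 : 'I_4 := @Ordinal 4 3 isT.

(* symplectic basis for A (indices 0..3 correspond to v_1..v_4) *)
Definition symplectic_basis (A : mat4) (v : 'I_4 -> vec4) : Prop :=
  is_basis4 v /\
  bform A (v i0) (v i1) = 1 /\ bform A (v i0) (v i2) = 0 /\
  bform A (v i0) (v i3) = 0 /\ bform A (v i1) (v i2) = 0 /\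
  bform A (v i1) (v i3) = 0 /\ bform A (v i2) (v i3) = 1.

Definition basis_values (v : 'I_4 -> vec4) : R * R * R * R * R * R :=
  (bform Jmat (v i0) (v i1), bform Jmat (v i0) (v i2), bform Jmat (v i0) (v i3),
   bform Jmat (v i1) (v i2), bform Jmat (v i1) (v i3), bform Jmat (v i2) (v i3)).

(* Main.v *)
Require Import Defs.
From mathcomp Require Import all_boot all_order all_algebra.
From mathcomp Require Import Rstruct.
Import GRing.Theory Num.Theory.
Local Open Scope ring_scope.

Definition gram (X : mat4) (v : 'I_4 -> vec4) : mat4 :=
  (colmat v)^T *m X *m colmat v.

Lemma gramE X v i j : gram X v i j = bform X (v i) (v j).
Proof.
rewrite /gram /bform !mxE; apply: eq_bigr => k _; rewrite !mxE.
congr (_ * _); apply: eq_bigr => l _; rewrite !mxE //.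
Qed.

Lemma bform_skew X u w : X^T = - X -> bform X u w = - bform X w u.
Proof.
move=> hX; rewrite /bform.
have -> : (u^T *m X *m w) 0 0 = ((u^T *m X *m w)^T) 0 0 by rewrite [RHS]mxE.
by rewrite !trmx_mul trmxK hX mulNmx mulmxN mulmxA mxE.
Qed.

Arguments bform_skew {X}.

Lemma bform_diag X u : X^T = - X -> bform X u u = 0.
Proof.
move=> hX; have h := bform_skew u u hX.
move: h; set b := bform X u u => h.
have : b *+ 2 = 0 by rewrite mulr2n {1}h addNr.
by move/eqP; rewrite mulrn_eq0 /= => /eqP.
Qed.

Lemma ord4_cases (P : 'I_4 -> Prop) : P i0 -> P i1 -> P i2 -> P i3 -> forall i, P i.
Proof.
move=> h0 h1 h2 h3 [[|[|[|[|k]]]] Hk].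
- by have -> : Ordinal Hk = i0 by apply: val_inj.
- by have -> : Ordinal Hk = i1 by apply: val_inj.
- by have -> : Ordinal Hk = i2 by apply: val_inj.
- by have -> : Ordinal Hk = i3 by apply: val_inj.
- by [].
Qed.

Lemma gram_eq X Y v w : X^T = - X -> Y^T = - Y ->
  bform X (v i0) (v i1) = bform Y (w i0) (w i1) ->
  bform X (v i0) (v i2) = bform Y (w i0) (w i2) ->
  bform X (v i0) (v i3) = bform Y (w i0) (w i3) ->
  bform X (v i1) (v i2) = bform Y (w i1) (w i2) ->
  bform X (v i1) (v i3) = bform Y (w i1) (w i3) ->
  bform X (v i2) (v i3) = bform Y (w i2) (w i3) ->
  gram X v = gram Y w.
Proof.
move=> hX hY e01 e02 e03 e12 e13 e23; apply/matrixP => i j; rewrite !gramE.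
move: i j; apply: ord4_cases; apply: ord4_cases;
  rewrite ?bform_diag // ?e01 ?e02 ?e03 ?e12 ?e13 ?e23 //;
  rewrite (bform_skew (v _) _ hX) (bform_skew (w _) _ hY);
  by rewrite ?e01 ?e02 ?e03 ?e12 ?e13 ?e23.
Qed.

Lemma J_skew : Jmat^T = - Jmat.
Proof.
suff h : (block_mx J0 0 0 J0 : 'M[Rdefinitions.R]_(2+2))^T = - block_mx J0 0 0 J0 by exact: h.
rewrite tr_block_mx !trmx0.
have -> : J0^T = - J0.
  apply/matrixP => i j; rewrite !mxE.
  by case: i => [[|[|i]] Hi]; case: j => [[|[|j]] Hj] //=; rewrite ?oppr0 ?opprK.
by rewrite opp_block_mx oppr0.
Qed.

Theorem mainTheorem10 (A B : mat4) (v w : 'I_4 -> vec4) :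
  is_S4 A -> is_S4 B ->
  symplectic_basis A v -> symplectic_basis B w ->
  basis_values v = basis_values w ->
  exists P : mat4, is_Sp4 P /\ A = P^T *m B *m P.
Proof.
move=> [hA _] [hB _] [vU [a01 [a02 [a03 [a12 [a13 a23]]]]]]
  [wU [b01 [b02 [b03 [b12 [b13 b23]]]]]] hbv.
rewrite /basis_values in hbv; case: hbv => c01 c02 c03 c12 c13 c23.
have gA : gram A v = gram B w.
  by apply: gram_eq; rewrite // ?a01 ?a02 ?a03 ?a12 ?a13 ?a23
     ?b01 ?b02 ?b03 ?b12 ?b13 ?b23.
have gJ : gram Jmat v = gram Jmat w by apply: gram_eq => //; exact: J_skew.
set V := colmat v in vU gA gJ *; set W := colmat w in wU gA gJ *.
have key : forall X Y, gram X v = gram Y w ->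
    X = (W *m invmx V)^T *m Y *m (W *m invmx V).
  move=> X Y e.
  have -> : (W *m invmx V)^T *m Y *m (W *m invmx V) = invmx V^T *m gram Y w *m invmx V.
    by rewrite /gram trmx_mul trmx_inv !mulmxA.
  rewrite -e /gram !mulmxA mulVmx ?unitmx_tr // mul1mx -mulmxA mulmxV // mulmx1 //.
exists (W *m invmx V); split; last exact: (key _ _ gA).
rewrite /is_Sp4; exact: (esym (key _ _ gJ)).
Qed.
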